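(* Let $\mathbf p=(p_1,\dots,p_n)$ be positive integers, $c\in[0,1]$, and $P=(p_1+\cdots+p_n)/\gcd(p_1,\dots,p_n)$. Write $S_c(\mathbf p)=(s_1,s_2,\dots)$. Then $s_{mP+k}=s_k$ for all integers $m\ge1$ and $k\ge1$. Moreover, $P$ is the minimal period of $S_c(\mathbf p)$.
   Context: Stationary divisor method with cut point $c\in[0,1]$: seats are allocated one at a time. Initially each party $i$ has $a_i=0$ seats; each next seat goes to a party $i$ maximizing $p_i/(a_i+c)$, whose $a_i$ then increases by $1$. Ties are broken in favor of the smallest index; parties are indexed so that $p_1\ge\cdots\ge p_n$. For $c=0$ the convention is that $p_i/0>p_j/0$ whenever $p_i>p_j$, and $p_i/0>p_j/k$ for every $k>0$. $S_c(\mathbf p)=(s_1,s_2,\dots)$ is the infinite sequence in which $s_j$ is the index of the party receiving the $j$-th seat. *)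

(* Defs.v *)
From mathcomp Require Import all_boot all_order all_algebra.
From mathcomp Require Import reals.
Set Implicit Arguments. Unset Strict Implicit. Unset Printing Implicit Defensive.
Import Order.TTheory GRing.Theory Num.Theory.
Local Open Scope ring_scope.

(* Parties are 'I_n.+1 (party i+1 of the paper is the ordinal i); n.+1 >= 1 parties.
   p : populations, a : current seat counts. *)
Section Stationary.
Variables (R : realType) (n : nat) (c : R) (p : 'I_n.+1 -> nat).

Definition zero_denom (a : 'I_n.+1 -> nat) (i : 'I_n.+1) : bool :=
  (c == 0) && (a i == 0%N).

(* quot_ge a i j : p_i/(a_i+c) >= p_j/(a_j+c), with the c = 0 conventions:
   p_i/0 > p_j/0 iff p_i > p_j, and p_i/0 > p_j/k for every k > 0. *)
Definition quot_ge (a : 'I_n.+1 -> nat) (i j : 'I_n.+1) : bool :=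
  match zero_denom a i, zero_denom a j with
  | true, true => (p j <= p i)%N
  | true, false => true
  | false, true => false
  | false, false =>
      (p j)%:R / ((a j)%:R + c) <= (p i)%:R / ((a i)%:R + c)
  end.

Definition winner (a : 'I_n.+1 -> nat) : 'I_n.+1 :=
  odflt ord0 [pick i | [forall j : 'I_n.+1, quot_ge a i j] &&
                       [forall j : 'I_n.+1, ((j < i)%N) ==> ~~ quot_ge a j i]].

Fixpoint alloc (k : nat) : 'I_n.+1 -> nat :=
  match k with
  | 0 => fun _ => 0%N
  | k'.+1 => let a := alloc k' in
             let w := winner a in
             fun i => if i == w then (a i).+1 else a i
  end.

(* S_c(p) = (s_1, s_2, ...): seat j (j >= 1) goes to party stat_seq j.
   (The value at j = 0 is meaningless.) *)
Definition stat_seq (j : nat) : 'I_n.+1 := winner (alloc j.-1).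

End Stationary.

Definition total_over_gcd (n : nat) (p : 'I_n.+1 -> nat) : nat :=
  ((\sum_(i < n.+1) p i) %/ (\big[gcdn/0%N]_(i < n.+1) p i))%N.

(* Main.v *)
Require Import Defs.
From mathcomp Require Import all_boot all_order all_algebra.
From mathcomp Require Import reals.
From mathcomp Require Import ring lra zify.
From Stdlib Require Import FunctionalExtensionality.
Set Implicit Arguments. Unset Strict Implicit. Unset Printing Implicit Defensive.
Import Order.TTheory GRing.Theory Num.Theory.
Local Open Scope ring_scope.

Section Proof.
Variables (R : realType) (n : nat) (p : 'I_n.+1 -> nat) (c : R).
Hypothesis hpos : forall i, (0 < p i)%N.
Hypothesis hsorted : forall i j : 'I_n.+1, (i <= j)%N -> (p j <= p i)%N.
Hypothesis hc : 0 <= c <= 1.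

Local Notation G := (quot_ge c p).
Local Notation Z := (zero_denom c).

Lemma den_pos (a : 'I_n.+1 -> nat) i : ~~ Z a i -> 0 < (a i)%:R + c.
Proof.
rewrite /zero_denom; case/andP: hc => c0 c1.
case: (eqVneq c 0) => [->|cn0] /=.
  by rewrite addr0 ltr0n lt0n.
move=> _; have cp : 0 < c by rewrite lt_neqAle eq_sym cn0 c0.
by apply: ltr_wpDl.
Qed.

Lemma G_cross (a : 'I_n.+1 -> nat) i j : ~~ Z a i -> ~~ Z a j ->
  G a i j = ((p j)%:R * ((a i)%:R + c) <= (p i)%:R * ((a j)%:R + c)).
Proof.
move=> zi zj; rewrite /quot_ge (negbTE zi) (negbTE zj).
by rewrite ler_pdivrMr ?den_pos // mulrAC ler_pdivlMr ?den_pos.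
Qed.

Lemma G_refl a i : G a i i.
Proof.
rewrite /quot_ge; case: (Z a i) => //.
Qed.

Lemma G_total a i j : G a i j || G a j i.
Proof.
rewrite /quot_ge; case: (Z a i); case: (Z a j) => //; first exact: leq_total.
exact: le_total.
Qed.

Lemma G_trans a i j k : G a i j -> G a j k -> G a i k.
Proof.
rewrite /quot_ge; case: (Z a i); case: (Z a j); case: (Z a k) => //.
  exact: (fun h1 h2 => leq_trans h2 h1).
by move=> h1 h2; apply: le_trans h2 h1.
Qed.


Lemma exists_max a : exists i, forall j, G a i j.
Proof.
pose f x y := if G a x y then x else y.
have H : forall s x, G a (foldl f x s) x /\ forall j, j \in s -> G a (foldl f x s) j.
  elim=> [|y s IH] x /=; first by split => //; exact: G_refl.
  have [H1 H2] := IH (f x y).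
  have fx : G a (f x y) x /\ G a (f x y) y.
    rewrite /f; case: ifP => h; first by split => //; exact: G_refl.
    split; last exact: G_refl.
    by have := G_total a x y; rewrite h.
  split; first exact: G_trans H1 fx.1.
  move=> j; rewrite inE => /orP [/eqP ->|js]; last exact: H2.
  exact: G_trans H1 fx.2.
exists (foldl f ord0 (enum 'I_n.+1)) => j.
by apply: (proj2 (H _ _)); rewrite mem_enum.
Qed.

Definition Apred a (i : 'I_n.+1) := [forall j : 'I_n.+1, G a i j] &&
                       [forall j : 'I_n.+1, ((j < i)%N) ==> ~~ G a j i].

Lemma A_uniq a i i' : Apred a i -> Apred a i' -> i = i'.
Proof.
move=> /andP [/forallP Mi /forallP Li] /andP [/forallP Mi' /forallP Li'].
case: (ltngtP i i') => h.
- by have := Li' i; rewrite h Mi.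
- by have := Li i'; rewrite h Mi'.
- exact: val_inj.
Qed.

Lemma A_exists a : exists w, Apred a w.
Proof.
have [i0 Hi0] := exists_max a.
have M0 : [forall j, G a i0 j] by apply/forallP.
case: (@arg_minnP _ i0 (fun i => [forall j, G a i j]) (fun i : 'I_n.+1 => nat_of_ord i) M0) => w /forallP Mw wmin.
exists w; apply/andP; split; first by apply/forallP.
apply/forallP => j; apply/implyP => jw; apply/negP => Gjw.
have : [forall k, G a j k] by apply/forallP => k; exact: G_trans Gjw (Mw k).
by move/wmin; rewrite leqNgt jw.
Qed.

Lemma winner_A a : Apred a (winner c p a).
Proof.
have [w Aw] := A_exists a.
rewrite /winner; case: pickP => [i Ai|/(_ w)] /=; first exact: Ai.
by rewrite /Apred in Aw; rewrite Aw.
Qed.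

Lemma winner_max a j : G a (winner c p a) j.
Proof. by have /andP [/forallP H _] := winner_A a. Qed.


Definition g := (\big[gcdn/0%N]_(i < n.+1) p i)%N.
Definition q i := (p i %/ g)%N.

Lemma g_dvd i : (g %| p i)%N.
Proof. by apply/dvdn_biggcdP: i isT. Qed.

Lemma g_pos : (0 < g)%N.
Proof.
rewrite lt0n; apply/negP => /eqP g0.
by have := g_dvd ord0; rewrite g0 dvd0n => /eqP h; have := hpos ord0; rewrite h.
Qed.

Lemma p_eq i : p i = (q i * g)%N.
Proof. by rewrite /q divnK // g_dvd. Qed.

Lemma q_pos i : (0 < q i)%N.
Proof. by have := hpos i; rewrite p_eq muln_gt0 => /andP []. Qed.

Lemma sumq : total_over_gcd p = (\sum_i q i)%N.
Proof.
rewrite /total_over_gcd -/g (eq_bigr (fun i => q i * g)%N); last by move=> i _; rewrite -p_eq.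
by rewrite -big_distrl /= mulnK // g_pos.
Qed.

Lemma gcdq : (\big[gcdn/0%N]_(i < n.+1) q i)%N = 1%N.
Proof.
have : (g * \big[gcdn/0%N]_(i < n.+1) q i = g * 1)%N.
  rewrite muln1 (big_morph (fun x => g * x)%N (muln_gcdr g) (muln0 g)).
  by rewrite /g; apply: eq_bigr => i _; rewrite mulnC -p_eq.
by move/eqP; rewrite eqn_mul2l eqn0Ngt g_pos /= => /eqP.
Qed.

Lemma Zden (a : 'I_n.+1 -> nat) i : Z a i -> (a i)%:R + c = 0.
Proof. by case/andP => /eqP -> /eqP ->; rewrite addr0. Qed.

Lemma G_shift (m : nat) (a : 'I_n.+1 -> nat) i j : (0 < m)%N ->
  G (fun k => m * q k + a k)%N i j = (Z a i && Z a j) || G a i j.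
Proof.
move=> m0.
have nz : forall k, ~~ Z (fun k => m * q k + a k)%N k.
  move=> k; rewrite /zero_denom negb_and; apply/orP; right.
  by rewrite -lt0n ltn_addr // muln_gt0 m0 q_pos.
rewrite G_cross ?nz // !p_eq !natrD !natrM.
set qi := (q i)%:R; set qj := (q j)%:R; set gg := g%:R; set mm := m%:R.
set ai := (a i)%:R; set aj := (a j)%:R.
have -> : qj * gg * (mm * qi + ai + c) <= qi * gg * (mm * qj + aj + c) =
          (qj * gg * (ai + c) <= qi * gg * (aj + c)).
  have -> : qj * gg * (mm * qi + ai + c) = qj * gg * mm * qi + qj * gg * (ai + c) by ring.
  have -> : qi * gg * (mm * qj + aj + c) = qj * gg * mm * qi + qi * gg * (aj + c) by ring.
  by rewrite lerD2l.
have qip : 0 < qi by rewrite ltr0n q_pos.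
have qjp : 0 < qj by rewrite ltr0n q_pos.
have ggp : 0 < gg by rewrite ltr0n g_pos.
case Zi : (Z a i); case Zj : (Z a j) => /=.
- by rewrite /ai /aj (Zden Zi) (Zden Zj) !mulr0 lexx.
- rewrite /quot_ge Zi Zj /ai (Zden Zi) mulr0; apply/idP.
  apply: mulr_ge0; first by apply: mulr_ge0; apply: ltW.
  exact: ltW (den_pos (negbT Zj)).
- rewrite /quot_ge Zi Zj /aj (Zden Zj) mulr0; apply/negbTE; rewrite -ltNge.
  by rewrite !mulr_gt0 // den_pos // Zi.
- by rewrite G_cross ?Zi ?Zj // !p_eq !natrM.
Qed.


Lemma GZ (a : 'I_n.+1 -> nat) i j : Z a i -> Z a j -> G a i j = (p j <= p i)%N.
Proof. by rewrite /quot_ge => -> ->. Qed.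

Lemma winner_shift (m : nat) (a : 'I_n.+1 -> nat) : (0 < m)%N ->
  winner c p (fun k => m * q k + a k)%N = winner c p a.
Proof.
move=> m0; rewrite /winner; congr odflt; apply: eq_pick => i /=.
apply/idP/idP.
- move=> /andP [/forallP H1 /forallP H2]; apply/andP; split.
    apply/forallP => j; have := H1 j; rewrite G_shift //.
    case/orP => [/andP [Zi Zj]|//]; rewrite GZ //.
    case: (leqP i j) => [/hsorted //|ji].
    by have := H2 j; rewrite ji G_shift // Zi Zj.
  apply/forallP => j; apply/implyP => ji; have := H2 j; rewrite ji G_shift //=.
  by rewrite negb_or => /andP [].
- move=> /andP [/forallP H1 /forallP H2]; apply/andP; split.
    by apply/forallP => j; rewrite G_shift // H1 orbT.
  apply/forallP => j; apply/implyP => ji; rewrite G_shift // negb_or.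
  have := H2 j; rewrite ji /= => ->; rewrite andbT.
  apply/negP => /andP [Zj Zi]; have := H2 j; rewrite ji /= GZ //.
  by rewrite hsorted // ltnW.
Qed.


Lemma alloc_S k i : alloc c p k.+1 i = (alloc c p k i + (i == winner c p (alloc c p k)))%N.
Proof. by rewrite /=; case: eqP => _; rewrite ?addn1 ?addn0. Qed.

Lemma sum_alloc k : (\sum_i alloc c p k i)%N = k.
Proof.
elim: k => [|k IH]; first by rewrite big1.
rewrite (eq_bigr _ (fun i _ => alloc_S k i)) big_split /= IH.
rewrite (bigD1 (winner c p (alloc c p k))) //= eqxx big1 ?addn0 ?addn1 //.
by move=> j /negbTE ->.
Qed.

Lemma noG (a : 'I_n.+1 -> nat) w j : a w = q w -> (a j < q j)%N -> ~~ G a w j.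
Proof.
move=> aw aj.
have Zw : ~~ Z a w by rewrite /zero_denom aw negb_and -lt0n q_pos orbT.
case Zj : (Z a j); first by rewrite /quot_ge (negbTE Zw) Zj.
rewrite G_cross ?Zj // -ltNge aw !p_eq !natrM.
have ajr : (a j)%:R + 1 <= (q j)%:R :> R by rewrite natr1 ler_nat.
have qwp : 0 < (q w)%:R :> R by rewrite ltr0n q_pos.
have qjp : 0 < (q j)%:R :> R by rewrite ltr0n q_pos.
have gp : 0 < g%:R :> R by rewrite ltr0n g_pos.
have key : 0 < (q w)%:R * (1 - c) + (q j)%:R * c :> R.
  case/andP: hc => c0 c1; case: (eqVneq c 0) => [->|cn0].
    by rewrite subr0 mulr1 mulr0 addr0.
  have cp : 0 < c by rewrite lt_neqAle eq_sym cn0 c0.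
  by apply: ltr_wpDl; [apply: mulr_ge0; lra | apply: mulr_gt0].
set QW := (q w)%:R in qwp key *; set QJ := (q j)%:R in ajr qjp key *.
set AJ := (a j)%:R in ajr *; set GG := g%:R in gp *.
have h1 : QW * (AJ + 1) <= QW * QJ by rewrite ler_pM2l.
have : 0 < GG * (QW * (1 - c) + QJ * c) by apply: mulr_gt0.
have : 0 <= GG * (QW * QJ - QW * (AJ + 1)) by apply: mulr_ge0; lra.
move=> h2 h3.
have -> : QW * GG * (AJ + c) = QJ * GG * (QW + c) - GG * (QW * QJ - QW * (AJ + 1)) - GG * (QW * (1 - c) + QJ * c) by ring.
lra.
Qed.


Lemma alloc_le k : (k <= \sum_i q i)%N -> forall i, (alloc c p k i <= q i)%N.
Proof.
elim: k => [|k IH] kP i; first by [].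
have IHk := IH (ltnW kP).
rewrite alloc_S; case: eqP => [->|_]; last by rewrite addn0.
rewrite addn1; set w := winner c p _.
rewrite ltn_neqAle IHk andbT; apply/negP => /eqP aw.
have [j aj] : exists j, (alloc c p k j < q j)%N.
  case: (boolP [exists j, (alloc c p k j < q j)%N]) => [/existsP //|/existsPn H].
  have : (\sum_i q i <= \sum_i alloc c p k i)%N.
    by apply: leq_sum => i0 _; have := H i0; rewrite -leqNgt.
  by rewrite sum_alloc leqNgt kP.
by have := noG aw aj; rewrite winner_max.
Qed.

Lemma alloc_P i : alloc c p (\sum_i q i) i = q i.
Proof.
apply/eqP; rewrite eqn_leq alloc_le //=.
have H := sumnB (index_enum 'I_n.+1) (P := xpredT) (fun i _ => alloc_le (leqnn _) i).
rewrite sum_alloc subnn in H.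
move/eqP: H; rewrite sum_nat_eq0 => /forallP /(_ i) /=.
by rewrite subn_eq0.
Qed.


Lemma alloc_shift m N : (0 < m)%N -> (forall i, alloc c p N i = m * q i)%N ->
  forall k i, alloc c p (N + k) i = (m * q i + alloc c p k i)%N.
Proof.
move=> m0 HN; elim=> [|k IH] i; first by rewrite addn0 HN addn0.
have E : alloc c p (N + k) = (fun i => m * q i + alloc c p k i)%N.
  by apply: functional_extensionality => j; exact: IH.
by rewrite addnS !alloc_S E winner_shift // addnA.
Qed.

Lemma alloc_mP m : (0 < m)%N -> forall i, alloc c p (m * \sum_i q i) i = (m * q i)%N.
Proof.
elim: m => [//|m IH] _ i.
case: (posnP m) => [->|mp]; first by rewrite !mul1n alloc_P.
by rewrite mulSnr (alloc_shift mp (IH mp)) alloc_P mulSnr.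
Qed.

Lemma part1 m k : (1 <= m)%N -> (1 <= k)%N ->
  stat_seq c p (m * \sum_i q i + k) = stat_seq c p k.
Proof.
move=> m1 k1; rewrite /stat_seq; case: k k1 => [//|k] _.
rewrite addnS /=.
have E : alloc c p (m * \sum_i q i + k) = (fun i => m * q i + alloc c p k i)%N.
  by apply: functional_extensionality => j; apply: alloc_shift => //; exact: alloc_mP.
by rewrite E winner_shift.
Qed.

Lemma part2 q0 : (1 <= q0)%N ->
  (forall k : nat, (1 <= k)%N -> stat_seq c p (q0 + k) = stat_seq c p k) ->
  (\sum_i q i <= q0)%N.
Proof.
move=> q1 per.
have add : forall k i, alloc c p (q0 + k) i = (alloc c p q0 i + alloc c p k i)%N.
  elim=> [|k IH] i; first by rewrite addn0 /= addn0.
  rewrite addnS !alloc_S IH -addnA; congr (_ + (_ + _))%N; congr (_ == _).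
  by have := per k.+1 isT; rewrite /stat_seq addnS.
have mul : forall N i, alloc c p (N * q0) i = (N * alloc c p q0 i)%N.
  elim=> [|N IH] i; first by [].
  by rewrite mulSn add IH mulSn.
have D : forall i, (\sum_i q i %| q0 * q i)%N.
  move=> i; rewrite -alloc_mP // mulnC mul; exact: dvdn_mulr.
have : (\sum_i q i %| q0)%N.
  have -> : q0 = (\big[gcdn/0%N]_(i < n.+1) (q0 * q i))%N.
    by rewrite -(big_morph (fun x => q0 * x)%N (muln_gcdr q0) (muln0 q0)) gcdq muln1.
  by apply/dvdn_biggcdP => i _; exact: D.
by move/dvdn_leq; apply.
Qed.

End Proof.

Theorem mainTheorem4 (R : realType) (n : nat) (p : 'I_n.+1 -> nat) (c : R)
  (hpos : forall i, (0 < p i)%N)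
  (hsorted : forall i j : 'I_n.+1, (i <= j)%N -> (p j <= p i)%N)
  (hc : 0 <= c <= 1) :
  let P := total_over_gcd p in
  (forall m k : nat, (1 <= m)%N -> (1 <= k)%N ->
     stat_seq c p (m * P + k) = stat_seq c p k)
  /\
  (forall q : nat, (1 <= q)%N ->
     (forall k : nat, (1 <= k)%N -> stat_seq c p (q + k) = stat_seq c p k) ->
     (P <= q)%N).
Proof.
move=> P; rewrite /P (sumq hpos); split.
- by move=> m k m1 k1; apply: part1.
- by move=> q0 q1 per; apply: (part2 hpos hsorted hc).
Qed.
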